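(* Let $x_->x_+>0$ be real numbers and $\omega>0$. On $\mathbb{C}^4$ with orthonormal basis $\{|0\rangle,|1\rangle,|2\rangle,|3\rangle\}$ define the Hermitian operators $$X\coloneqq (x_--x_+)(|1\rangle\langle 2|+|2\rangle\langle 1|)+\sqrt{x_+x_-}\,(|0\rangle\langle 1|+|1\rangle\langle 0|+|2\rangle\langle 3|+|3\rangle\langle 2|),$$ $$Y\coloneqq -i(x_--x_+)(|1\rangle\langle 2|-|2\rangle\langle 1|)-i\sqrt{x_+x_-}\,(|0\rangle\langle 1|-|1\rangle\langle 0|+|2\rangle\langle 3|-|3\rangle\langle 2|),$$ and the Hamiltonian $H\coloneqq\omega\sum_{n=0}^3 n\,|n\rangle\langle n|$, with $X(t)\coloneqq e^{iHt}Xe^{-iHt}$, $Y(t)\coloneqq e^{iHt}Ye^{-iHt}$. Then: (i) the spectrum of $X$ is $\{-x_-,-x_+,x_+,x_-\}$; (ii) for all $t$, $X(t)=\cos(\omega t)X+\sin(\omega t)Y$ and $Y(t)=\cos(\omega t)Y-\sin(\omega t)X$; (iii) with $t_k\coloneqq 2\pi k/(3\omega)$ and $|\psi\rangle\coloneqq(|0\rangle-|3\rangle)/\sqrt2$, $$\frac13\sum_{k=0}^2\langle\psi|\Theta(X(t_k))|\psi\rangle=\big(1+x_+/x_-\big)^{-1}.$$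
   Context: For a Hermitian operator $A$ on a finite-dimensional Hilbert space, $\Theta(A)$ denotes the spectral function of $A$ with $\Theta(a)=1$ for $a>0$, $\Theta(a)=0$ for $a<0$, $\Theta(0)=1/2$; i.e. the projector onto the positive-eigenvalue eigenspace plus one half the projector onto the kernel. *)

(* Defs.v *)
From HB Require Import structures.
From mathcomp Require Import all_boot all_order all_algebra.
From mathcomp Require Import complex.
From mathcomp Require Import reals trigo.

Set Implicit Arguments.
Unset Strict Implicit.
Unset Printing Implicit Defensive.

Import Order.TTheory GRing.Theory Num.Theory.
Local Open Scope ring_scope.
Local Open Scope complex_scope.
Local Open Scope sesquilinear_scope.

Section Defs.
Variable R : realType.

(* Spectral (functional) calculus for a Hermitian matrix A, via the library
   spectral decomposition  A = M^-1 *m diag_mx d *m M  with M unitary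
   (so M^-1 = M^t* ) and d real:  f(A) := M^t* *m diag_mx (f d) *m M. *)
Definition mxfun n (f : R -> R[i]) (A : 'M[R[i]]_n) : 'M[R[i]]_n :=
  let M := spectralmx A in
  M ^t* *m diag_mx (\row_j f (@complex.Re R (spectral_diag A 0 j))) *m M.

Definition theta (a : R) : R[i] :=
  if 0 < a then 1 else if a == 0 then 2^-1 else 0.

Definition Theta n (A : 'M[R[i]]_n) : 'M[R[i]]_n := mxfun theta A.

Definition expi (s : R) : R[i] := (cos s) +i* (sin s).

Definition expiH n (s : R) (A : 'M[R[i]]_n) : 'M[R[i]]_n :=
  mxfun (fun l => expi (l * s)) A.

Definition kb (i j : nat) : 'M[R[i]]_4 := delta_mx (inord i) (inord j).

Definition ket (n : nat) : 'cV[R[i]]_4 := delta_mx (inord n) 0.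

Definition expect (psi : 'cV[R[i]]_4) (A : 'M[R[i]]_4) : R[i] :=
  (psi ^t* *m A *m psi) 0 0.

End Defs.

(* Main.v *)
Require Import Defs.
From HB Require Import structures.
From mathcomp Require Import all_boot all_order all_algebra.
From mathcomp Require Import complex.
From mathcomp Require Import reals trigo.
From mathcomp Require Import ring lra.

Import Order.TTheory GRing.Theory Num.Theory.
Local Open Scope ring_scope.
Local Open Scope complex_scope.
Local Open Scope sesquilinear_scope.

Section Gen.
Variable R : realType.
Local Notation C := R[i].

Lemma Cext (z1 z2 : C) : complex.Re z1 = complex.Re z2 -> complex.Im z1 = complex.Im z2 -> z1 = z2.
Proof. by case: z1 => a b; case: z2 => c d /= -> ->. Qed.
Lemma cReD (x y : C) : complex.Re (x + y) = complex.Re x + complex.Re y. Proof. by case: x; case: y. Qed.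
Lemma cImD (x y : C) : complex.Im (x + y) = complex.Im x + complex.Im y. Proof. by case: x; case: y. Qed.
Lemma cReN (x : C) : complex.Re (- x) = - complex.Re x. Proof. by case: x. Qed.
Lemma cImN (x : C) : complex.Im (- x) = - complex.Im x. Proof. by case: x. Qed.
Lemma cReM (x y : C) : complex.Re (x * y) = complex.Re x * complex.Re y - complex.Im x * complex.Im y.
Proof. by case: x; case: y. Qed.
Lemma cImM (x y : C) : complex.Im (x * y) = complex.Re x * complex.Im y + complex.Im x * complex.Re y.
Proof. by case: x => a b; case: y => c d /=; ring. Qed.
Lemma cRe_c (r : R) : complex.Re (r%:C) = r. Proof. by []. Qed.
Lemma cIm_c (r : R) : complex.Im (r%:C) = 0. Proof. by []. Qed.
Lemma cRe_i : complex.Re ('i : C) = 0. Proof. by []. Qed.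
Lemma cIm_i : complex.Im ('i : C) = 1. Proof. by []. Qed.
Lemma cRe0 : complex.Re (0 : C) = 0. Proof. by []. Qed.
Lemma cIm0 : complex.Im (0 : C) = 0. Proof. by []. Qed.
Lemma cRe1 : complex.Re (1 : C) = 1. Proof. by []. Qed.
Lemma cIm1 : complex.Im (1 : C) = 0. Proof. by []. Qed.
Lemma cRe_nat n : complex.Re (n%:R : C) = n%:R.
Proof. by elim: n => // n IH; rewrite -!natr1 cReD IH. Qed.
Lemma cIm_nat n : complex.Im (n%:R : C) = 0.
Proof. by elim: n => // n IH; rewrite -!natr1 cImD IH addr0. Qed.
Lemma cRe_conj (x : C) : complex.Re (Num.conj x) = complex.Re x. Proof. by case: x. Qed.
Lemma cIm_conj (x : C) : complex.Im (Num.conj x) = - complex.Im x. Proof. by case: x. Qed.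
Lemma cRe_expi (s : R) : complex.Re (expi s) = cos s. Proof. by []. Qed.
Lemma cIm_expi (s : R) : complex.Im (expi s) = sin s. Proof. by []. Qed.

Lemma conj_c (r : R) : Num.conj (r%:C) = r%:C.
Proof. by apply: Cext; rewrite ?cRe_conj ?cIm_conj //= oppr0. Qed.

Lemma expiD (a b : R) : expi a * expi b = expi (a + b).
Proof. apply: Cext; rewrite ?cReM ?cImM ?cRe_expi ?cIm_expi ?cosD ?sinD; ring. Qed.

Lemma conj_expi (a : R) : Num.conj (expi a) = expi (- a).
Proof. by apply: Cext; rewrite ?cRe_conj ?cIm_conj ?cRe_expi ?cIm_expi ?cosN ?sinN. Qed.

Lemma trC_mul m n p (A : 'M[C]_(m, n)) (B : 'M[C]_(n, p)) : (A *m B)^t* = B^t* *m A^t*.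
Proof. by rewrite trmx_mul map_mxM. Qed.

Lemma mxfun_unitary n f (A U : 'M[C]_n) (d : 'rV[C]_n) :
  U \is unitarymx -> A = U^t* *m diag_mx d *m U ->
  mxfun f A = U^t* *m diag_mx (\row_j f (complex.Re (d 0 j))) *m U.
Proof.
move=> Uu hA.
have An : A \is normalmx.
  by apply/orthomx_spectral_subproof; exists (U, d) => //=; rewrite invmx_unitary.
have /orthomx_spectralP hA' := An.
rewrite /mxfun.
have Mu : spectralmx A \is unitarymx := spectral_unitarymx A.
move: (spectralmx A) (spectral_diag A) Mu hA' => M d' Mu.
rewrite (invmx_unitary Mu) => hA'.
have [V defV] : {V | V = M *m U^t*} by exists (M *m U^t*).
have MV : M = V *m U by rewrite defV (mulmxKtV M Uu erefl).
have Vu : V \is unitarymx.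
  rewrite defV; exact: (mul_unitarymx Mu (etrans (trmxC_unitary U) Uu)).
have VV : V^t* *m V = 1%:M by rewrite -[V^t* *m V]mul1mx mulmxA (mulmxKtV 1%:M Vu erefl).
have e1 : M *m A = diag_mx d' *m M.
  by rewrite {1}hA' !mulmxA (unitarymxP Mu) mul1mx.
have e2 : A *m U^t* = U^t* *m diag_mx d.
  by rewrite hA -!mulmxA (unitarymxP Uu) mulmx1.
have hV : diag_mx d' *m V = V *m diag_mx d.
  by rewrite defV mulmxA -e1 -(mulmxA M A) e2 mulmxA.
have hV2 : diag_mx (\row_j f (complex.Re (d' 0 j))) *m V
         = V *m diag_mx (\row_j f (complex.Re (d 0 j))).
  apply/matrixP => i j; move/matrixP: hV => /(_ i j).
  rewrite !mul_diag_mx !mul_mx_diag !mxE.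
  have [->|nz] := eqVneq (V i j) 0; first by move=> _; rewrite mulr0 mul0r.
  move=> h; have -> : d' 0 i = d 0 j by apply: (mulfI nz); rewrite mulrC h.
  by rewrite mulrC.
rewrite MV trC_mul !mulmxA -[_ *m _ *m V]mulmxA hV2.
by rewrite !mulmxA -(mulmxA (U^t*)) VV mulmx1.
Qed.

End Gen.

Lemma eq_inord (i : 'I_4) (b : nat) : (b < 4)%N -> (i == inord b) = (val i == b).
Proof. by move=> hb; rewrite -val_eqE /= inordK. Qed.

Ltac c4 i := case: i => [[|[|[|[|?]]]] ?] //=.

Ltac csplit := apply: Cext; rewrite ?(cRe_i, cIm_i, cReD, cImD, cReN, cImN, cReM, cImM,
  cRe_i, cIm_i, cRe_c, cIm_c, cRe0, cIm0, cRe1, cIm1, cRe_nat, cIm_nat, cRe_conj, cIm_conj,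
  cRe_expi, cIm_expi).

Section Alg.
Variable R : realType.
Local Notation C := R[i].
Variables (p m : R).

Definition Xa : 'M[C]_4 :=
    (m * m - p * p)%:C *: (kb R 1 2 + kb R 2 1)
    + (p * m)%:C *: (kb R 0 1 + kb R 1 0 + kb R 2 3 + kb R 3 2).

Definition avR (i : nat) : R :=
  match i with 0 => p * m | 1 => m * m - p * p | 2 => p * m | _ => 0 end.

Definition XfR (i j : nat) : R :=
  if j == i.+1 then avR i else if i == j.+1 then avR j else 0.

Definition XR : 'M[R]_4 := \matrix_(i, j) XfR i j.

Lemma XaE : Xa = \matrix_(i, j) (XfR i j)%:C.
Proof.
apply/matrixP => i j; rewrite /Xa !mxE !eq_inord //.
by c4 i; c4 j; rewrite /XfR /=; ring.
Qed.

Definition Ya : 'M[C]_4 :=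
    - ('i * (m * m - p * p)%:C) *: (kb R 1 2 - kb R 2 1)
    - ('i * (p * m)%:C) *: (kb R 0 1 - kb R 1 0 + kb R 2 3 - kb R 3 2).

Definition Yf (i j : nat) : C :=
  if j == i.+1 then - ('i * (avR i)%:C) else if i == j.+1 then 'i * (avR j)%:C else 0.

Lemma YaE : Ya = \matrix_(i, j) Yf i j.
Proof.
apply/matrixP => i j; rewrite /Ya !mxE !eq_inord //.
by c4 i; c4 j; rewrite /Yf /=; ring.
Qed.

Variable w : R.

Definition Ha : 'M[C]_4 := \sum_(n < 4) (w * n%:R)%:C *: kb R n n.

Definition hrow : 'rV[C]_4 := \row_j (w * (j : nat)%:R)%:C.

Lemma HaE : Ha = diag_mx hrow.
Proof.
rewrite diag_mx_sum_delta /Ha; apply: eq_bigr => n _.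
by rewrite /kb inord_val mxE.
Qed.

Definition erow (t : R) : 'rV[C]_4 := \row_j expi (w * (j : nat)%:R * t).

Lemma unitary1 n : (1%:M : 'M[C]_n) \is unitarymx.
Proof. by apply/unitarymxP; rewrite trmx1 map_mx1 mulmx1. Qed.

Lemma trC1 n : (1%:M : 'M[C]_n)^t* = 1%:M.
Proof. by rewrite trmx1 map_mx1. Qed.

Lemma expiHE (t : R) : expiH t Ha = diag_mx (erow t).
Proof.
rewrite /expiH (@mxfun_unitary _ _ _ _ 1%:M hrow) ?unitary1 //; last first.
  by rewrite trC1 mul1mx mulmx1 HaE.
rewrite trC1 mul1mx mulmx1; congr diag_mx; apply/rowP => j; rewrite !mxE.
by rewrite cRe_c.
Qed.

Lemma eprod_up (a : nat) (t : R) :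
  expi (w * a%:R * t) * expi (w * a.+1%:R * (- t)) = (cos (w * t))%:C - 'i * (sin (w * t))%:C.
Proof.
have E : w * a%:R * t + w * a.+1%:R * (- t) = - (w * t) by rewrite -natr1; ring.
rewrite expiD E.
by csplit; rewrite ?cosN ?sinN; ring.
Qed.

Lemma eprod_dn (a : nat) (t : R) :
  expi (w * a.+1%:R * t) * expi (w * a%:R * (- t)) = (cos (w * t))%:C + 'i * (sin (w * t))%:C.
Proof.
have E : w * a.+1%:R * t + w * a%:R * (- t) = w * t by rewrite -natr1; ring.
rewrite expiD E.
by csplit; ring.
Qed.

Lemma XtE (t : R) : diag_mx (erow t) *m Xa *m diag_mx (erow (- t))
   = (cos (w * t))%:C *: Xa + (sin (w * t))%:C *: Ya.
Proof.
apply/matrixP => i j; rewrite mul_mx_diag mul_diag_mx XaE YaE !mxE /XfR /Yf.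
case: ifP => [/eqP hj|_].
  by rewrite hj mulrAC eprod_up; csplit; ring.
case: ifP => [/eqP hi|_].
  by rewrite hi mulrAC eprod_dn; csplit; ring.
by rewrite !mulr0 mul0r addr0.
Qed.

Lemma YtE (t : R) : diag_mx (erow t) *m Ya *m diag_mx (erow (- t))
   = (cos (w * t))%:C *: Ya - (sin (w * t))%:C *: Xa.
Proof.
apply/matrixP => i j; rewrite mul_mx_diag mul_diag_mx XaE YaE !mxE /XfR /Yf.
case: ifP => [/eqP hj|_].
  by rewrite hj mulrAC eprod_up; csplit; ring.
case: ifP => [/eqP hi|_].
  by rewrite hi mulrAC eprod_dn; csplit; ring.
by rewrite !mulr0 mul0r subr0.
Qed.

End Alg.

Section Spec.
Variable R : realType.
Local Notation C := R[i].
Variables (p m N : R).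
Hypothesis hN : N * N * (2 * (m * m + p * p)) = 1.

Lemma trick (a b : R) : a = b * (N * N * (2 * (m * m + p * p))) -> a = b.
Proof. by rewrite hN mulr1. Qed.

Definition Uf (i j : nat) : R :=
  match i, j with
  | 0, 0 => p | 0, 1 => - m | 0, 2 => m | 0, 3 => - p
  | 1, 0 => m | 1, 1 => - p | 1, 2 => - p | 1, 3 => m
  | 2, 0 => m | 2, 1 => p | 2, 2 => - p | 2, 3 => - m
  | 3, 0 => p | 3, 1 => m | 3, 2 => m | 3, 3 => p
  | _, _ => 0 end.

Definition UR : 'M[R]_4 := \matrix_(i, j) (N * Uf i j).

Definition lamf (j : nat) : R :=
  match j with 0 => - (m * m) | 1 => - (p * p) | 2 => p * p | _ => m * m end.

Definition lamR : 'rV[R]_4 := \row_j lamf j.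

Lemma UR_unitary : UR *m UR^T = 1%:M.
Proof.
apply/matrixP => i j; rewrite !mxE !big_ord_recl big_ord0 !mxE /bump /=.
by c4 i; c4 j; apply: trick; ring.
Qed.

Lemma XR_decomp : XR R p m = UR^T *m diag_mx lamR *m UR.
Proof.
rewrite mul_mx_diag; apply/matrixP => i j; rewrite !mxE !big_ord_recl big_ord0 !mxE /bump /=.
by c4 i; c4 j; rewrite /XfR /=; apply/esym/trick; ring.
Qed.

Local Notation cm := (map_mx (real_complex R)).

Definition Ua : 'M[C]_4 := cm UR.
Definition lam : 'rV[C]_4 := cm lamR.

Lemma cm_conj k l (A : 'M[R]_(k, l)) : (cm A)^t* = cm A^T.
Proof. by apply/matrixP => i j; rewrite !mxE conj_c. Qed.

Lemma Ua_unitary : Ua \is unitarymx.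
Proof.
apply/unitarymxP; rewrite /Ua cm_conj -map_mxM UR_unitary.
by apply/matrixP => i j; rewrite !mxE; case: (i == j).
Qed.

Lemma Xa_cm : Xa R p m = cm (XR R p m).
Proof. by rewrite XaE; apply/matrixP => i j; rewrite !mxE. Qed.

Lemma Xa_decomp : Xa R p m = Ua^t* *m diag_mx lam *m Ua.
Proof.
rewrite Xa_cm XR_decomp /Ua cm_conj !map_mxM map_diag_mx.
by [].
Qed.

End Spec.

Section Eig.
Variable R : realType.
Local Notation C := R[i].

Lemma eig_conj n (A U : 'M[C]_n) (d : 'rV[C]_n) (a : C) :
  U \is unitarymx -> A = U^t* *m diag_mx d *m U ->
  eigenvalue A a = eigenvalue (diag_mx d) a.
Proof.
move=> Uu hA; apply/eigenvalueP/eigenvalueP => [[v hv nz]|[v hv nz]].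
- exists (v *m U^t*).
    have := congr1 (mulmx^~ (U^t*)) hv; rewrite /= hA !mulmxA (mulmxtVK _ Uu).
    by move=> ->; rewrite scalemxAl.
  apply: contra nz => /eqP h; apply/eqP.
  by rewrite -(mulmxKtV v Uu erefl) h mul0mx.
- exists (v *m U).
    by rewrite hA !mulmxA (mulmxtVK _ Uu) hv scalemxAl.
  apply: contra nz => /eqP h; apply/eqP.
  by rewrite -(mulmxtVK v Uu) h mul0mx.
Qed.

Lemma eig_diag n (d : 'rV[C]_n) (a : C) :
  eigenvalue (diag_mx d) a <-> exists j, d 0 j = a.
Proof.
split.
- move/eigenvalueP => [v hv nz].
  case: (pickP (fun j => v 0 j != 0)) => [j hj|h]; last first.
    case/eqP: nz; apply/rowP => j; rewrite mxE.
    by move: (h j) => /negbFE /eqP.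
  exists j; move/rowP: hv => /(_ j); rewrite mul_mx_diag !mxE.
  by move=> h; apply: (mulfI hj); rewrite h mulrC.
- case=> j <-; apply/eigenvalueP; exists (delta_mx 0 j).
    apply/rowP => k; rewrite mul_mx_diag !mxE.
    by have [->|_] := eqVneq k j; rewrite eqxx /= ?mulr1 ?mul1r ?mulr0 ?mul0r.
  apply/eqP => /rowP /(_ j); rewrite !mxE !eqxx /=.
  by move/eqP; rewrite oner_eq0.
Qed.

Lemma theta_pos (a : R) : 0 < a -> theta a = 1.
Proof. by move=> h; rewrite /theta h. Qed.

Lemma theta_neg (a : R) : a < 0 -> theta a = 0.
Proof. by move=> h; rewrite /theta ltNge (ltW h) /= lt_eqF. Qed.

End Eig.

Section Expect.
Variable R : realType.
Local Notation C := R[i].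
Local Notation cm := (map_mx (real_complex R)).
Variables (p m N r w : R).
Hypothesis hN : N * N * (2 * (m * m + p * p)) = 1.
Hypothesis hr : r * r * 2 = 1.
Hypothesis hp : 0 < p.
Hypothesis hm : 0 < m.

Lemma trick_r (a b : R) : a = b * (r * r * 2) -> a = b.
Proof. by rewrite hr mulr1. Qed.

Definition psiv : 'cV[C]_4 := (r%:C) *: (ket R 0 - ket R 3).
Definition psiR : 'cV[R]_4 := r *: (delta_mx (inord 0) 0 - delta_mx (inord 3) 0).

Lemma psi_cm : psiv = cm psiR.
Proof. by apply/matrixP => i j; rewrite !mxE; csplit; ring. Qed.

Lemma DtC (s : R) : (diag_mx (erow R w s))^t* = diag_mx (erow R w (- s)).
Proof.
rewrite tr_diag_mx map_diag_mx; congr diag_mx; apply/rowP => j; rewrite !mxE.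
change (Num.conj (expi (w * (j : nat)%:R * s)) = expi (w * (j : nat)%:R * (- s))).
rewrite conj_expi.
by congr expi; ring.
Qed.

Lemma D_unitaryT (s : R) : diag_mx (erow R w s) *m diag_mx (erow R w (- s)) = 1%:M :> 'M[C]_4.
Proof.
rewrite mulmx_diag -diag_const_mx; congr diag_mx; apply/rowP => j; rewrite !mxE expiD.
have -> : w * (j : nat)%:R * s + w * (j : nat)%:R * (- s) = 0 by ring.
by csplit; rewrite ?cos0 ?sin0.
Qed.

Lemma D_unitary (s : R) : diag_mx (erow R w s) \is unitarymx.
Proof. by apply/unitarymxP; rewrite DtC; exact: D_unitaryT. Qed.

Lemma W_unitary t : Ua R p m N *m diag_mx (erow R w (- t)) \is unitarymx.
Proof. exact: (mul_unitarymx (@Ua_unitary R p m N hN) (D_unitary _)). Qed.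

Lemma Xt_decomp t : diag_mx (erow R w t) *m Xa R p m *m diag_mx (erow R w (- t))
  = (Ua R p m N *m diag_mx (erow R w (- t)))^t* *m diag_mx (lam R p m)
     *m (Ua R p m N *m diag_mx (erow R w (- t))).
Proof. by rewrite trC_mul DtC opprK (@Xa_decomp R p m N hN) !mulmxA. Qed.

Lemma expect_conj (V : 'M[C]_4) (Dg : 'M[C]_4) (ps : 'cV[C]_4) :
  expect ps (V^t* *m Dg *m V) = ((V *m ps)^t* *m Dg *m (V *m ps)) 0 0.
Proof. by rewrite /expect trC_mul !mulmxA. Qed.

Definition thR : 'rV[R]_4 := \row_j (if (j : nat) < 2 then 0 else 1)%N%:R.

Lemma th_cm : \row_j theta (complex.Re (lam R p m 0 j)) = cm thR.
Proof.
have t0 : theta (- (m * m)) = 0 by apply: theta_neg; rewrite oppr_lt0 mulr_gt0.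
have t1 : theta (- (p * p)) = 0 by apply: theta_neg; rewrite oppr_lt0 mulr_gt0.
have t2 : theta (p * p) = 1 by apply: theta_pos; rewrite mulr_gt0.
have t3 : theta (m * m) = 1 by apply: theta_pos; rewrite mulr_gt0.
apply/rowP => j; rewrite !mxE cRe_c.
by c4 j; rewrite ?t0 ?t1 ?t2 ?t3.
Qed.

Lemma expect_val t : diag_mx (erow R w (- t)) *m psiv = psiv ->
  expect psiv (Theta (diag_mx (erow R w t) *m Xa R p m *m diag_mx (erow R w (- t))))
  = (2 * N * N * (m * m))%:C.
Proof.
move=> hpsi.
rewrite /Theta (@mxfun_unitary R 4 _ _ _ _ (W_unitary t) (Xt_decomp t)) expect_conj.
rewrite -(mulmxA (Ua R p m N) _ psiv) hpsi th_cm psi_cm /Ua -map_mxM cm_conj -map_diag_mx -!map_mxM mxE.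
congr (_%:C).
rewrite !(mxE, big_ord_recl, big_ord0) !eq_inord // /bump /=.
by apply: trick_r; ring.
Qed.

End Expect.

Section Final.
Variable R : realType.
Local Notation C := R[i].
Variables (r w : R).

Lemma e0 (x : R) : expi (w * 0%:R * x) = 1.
Proof. by rewrite mulr0 mul0r; csplit; rewrite ?cos0 ?sin0. Qed.

Lemma e3 (hw : w != 0) (k : nat) : expi (w * 3%:R * - (2 * pi * k%:R / (3 * w))) = 1.
Proof.
have -> : w * 3%:R * - (2 * pi * k%:R / (3 * w)) = - (0 + pi *+ 2 *+ k).
  by rewrite add0r -(mulr_natr (pi *+ 2) k) -(mulr_natr pi 2); field.
csplit; rewrite ?cosN ?sinN.
  by rewrite (periodicn (@cosD2pi R)) cos0.
by rewrite (periodicn (@sinD2pi R)) sin0 oppr0.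
Qed.

Lemma hpsi_k (hw : w != 0) (k : nat) :
  diag_mx (erow R w (- (2 * pi * k%:R / (3 * w)))) *m psiv R r = psiv R r.
Proof.
apply/matrixP => i j; rewrite mul_diag_mx !mxE !eq_inord //.
case: j => [[|?] ?] //.
c4 i.
- by rewrite e0 mul1r.
- by ring.
- by ring.
- by rewrite e3 // mul1r.
Qed.

End Final.

Lemma keyR {R : realType} {p m N : R} (hp : 0 < p) (hm : 0 < m)
  (hN : N * N * (2 * (m * m + p * p)) = 1) :
  2 * N * N * (m * m) = (1 + p * p / (m * m))^-1.
Proof.
have hmm : m * m != 0 by rewrite gt_eqF // mulr_gt0.
have hsum : m * m + p * p != 0 by rewrite gt_eqF // addr_gt0 // mulr_gt0.
have e1 : (1 + p * p / (m * m))^-1 = m * m / (m * m + p * p).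
  by field; rewrite hsum gt_eqF.
rewrite e1; apply: (mulIf hsum); rewrite divfK //.
transitivity (m * m * (N * N * (2 * (m * m + p * p)))); first by ring.
by rewrite hN mulr1.
Qed.

Theorem mainTheorem2 (R : realType) (xm xp w : R)
  (hxp : 0 < xp) (hxpm : xp < xm) (hw : 0 < w) :
  let c (r : R) : R[i] := r%:C in
  let X : 'M[R[i]]_4 :=
    c (xm - xp) *: (kb R 1 2 + kb R 2 1)
    + c (Num.sqrt (xp * xm)) *: (kb R 0 1 + kb R 1 0 + kb R 2 3 + kb R 3 2) in
  let Y : 'M[R[i]]_4 :=
    - ('i * c (xm - xp)) *: (kb R 1 2 - kb R 2 1)
    - ('i * c (Num.sqrt (xp * xm))) *: (kb R 0 1 - kb R 1 0 + kb R 2 3 - kb R 3 2) in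
  let H : 'M[R[i]]_4 := \sum_(n < 4) c (w * n%:R) *: kb R n n in
  let Xt (t : R) := expiH t H *m X *m expiH (- t) H in
  let Yt (t : R) := expiH t H *m Y *m expiH (- t) H in
  let tk (k : nat) : R := 2 * pi * k%:R / (3 * w) in
  let psi : 'cV[R[i]]_4 := c (Num.sqrt 2)^-1 *: (ket R 0 - ket R 3) in
  [/\ (forall a : R[i], eigenvalue X a <-> a \in [:: c (- xm); c (- xp); c xp; c xm]),
      (forall t : R, Xt t = c (cos (w * t)) *: X + c (sin (w * t)) *: Y
                  /\ Yt t = c (cos (w * t)) *: Y - c (sin (w * t)) *: X)
    & 3%:R^-1 * (\sum_(k < 3) expect psi (Theta (Xt (tk k))))
        = (1 + c (xp / xm))^-1].
Proof.
have hxm : 0 < xm := lt_trans hxp hxpm.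
have [p hp ep] : exists2 p : R, 0 < p & xp = p * p.
  by exists (Num.sqrt xp); rewrite ?sqrtr_gt0 // -expr2 sqr_sqrtr // ltW.
have [m hm em] : exists2 m : R, 0 < m & xm = m * m.
  by exists (Num.sqrt xm); rewrite ?sqrtr_gt0 // -expr2 sqr_sqrtr // ltW.
subst xp xm.
have es : Num.sqrt (p * p * (m * m)) = p * m.
  have -> : p * p * (m * m) = (p * m) ^+ 2 by ring.
  by rewrite sqrtr_sqr gtr0_norm // mulr_gt0.
have ha : 0 < 2 * (m * m + p * p) by rewrite mulr_gt0 // addr_gt0 // mulr_gt0.
have [N hN] : exists N : R, N * N * (2 * (m * m + p * p)) = 1.
  exists (Num.sqrt (2 * (m * m + p * p)))^-1.
  have hs := sqr_sqrtr (ltW ha).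
  have hs0 : Num.sqrt (2 * (m * m + p * p)) != 0 by rewrite gt_eqF // sqrtr_gt0.
  by rewrite -[X in _ * X]hs; field.
pose r : R := (Num.sqrt 2)^-1.
have hr : r * r * 2 = 1.
  have h2 : (0 : R) < 2 by [].
  have hs := sqr_sqrtr (ltW h2).
  have hs0 : Num.sqrt (2 : R) != 0 by rewrite gt_eqF // sqrtr_gt0.
  by rewrite /r -[X in _ * X]hs; field.
have hw' : w != 0 by rewrite gt_eqF.
move=> c X Y H Xt Yt tk psi.
have HX : X = Xa R p m by rewrite /X /c es.
have HY : Y = Ya R p m by rewrite /Y /c es.
have HH : H = Ha R w by [].
have Hpsi : psi = psiv R r by [].
split.
- move=> a; rewrite HX (@eig_conj R 4 _ _ _ a (@Ua_unitary R p m N hN) (@Xa_decomp R p m N hN)).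
  apply: (iff_trans (@eig_diag R 4 _ a)); split.
    case=> j <-; case: j => [[|[|[|[|j]]]] hj]; rewrite !mxE /c;
      try (by exfalso; move: hj; rewrite !ltnS ltn0);
      rewrite [lamf _ _ _ _]/= !inE eqxx ?orbT ?orTb //.
  rewrite !inE => /or4P [] /eqP ->;
    [exists (inord 0) | exists (inord 1) | exists (inord 2) | exists (inord 3)];
    rewrite !mxE inordK //.
- move=> t; rewrite /Xt /Yt HX HY HH !expiHE.
  by split; [exact: XtE | exact: YtE].
have Hk : forall k, expect psi (Theta (Xt (tk k))) = (2 * N * N * (m * m))%:C.
  move=> k; rewrite /Xt /tk HX HH Hpsi !expiHE.
  exact: (@expect_val R p m N r w hN hr hp hm _ (@hpsi_k R r w hw' k)).
rewrite (eq_bigr _ (fun (k : 'I_3) _ => Hk k)) sumr_const card_ord.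
have key := keyR hp hm hN.
have h3 : (3%:R : R[i]) != 0 by rewrite pnatr_eq0.
rewrite -(mulr_natr ((2 * N * N * (m * m))%:C) 3) mulrCA mulVf // mulr1.
rewrite key fmorphV rmorphD rmorph1.
reflexivity.
Qed.
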